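(* A $\mathsf{BST}^{\otimes}$-formula $\Phi$ with $n$ distinct variables is satisfiable if and only if it is satisfied by some partition with exactly $2^{n}-1$ blocks.
   Context: Sets range over the von Neumann universe of well-founded sets. For sets $s,t$, $s\otimes t=\{\{u,v\} : u\in s,\ v\in t\}$. A $\mathsf{BST}^{\otimes}$-formula is a propositional combination of atoms $x=y\cup z$, $x=y\cap z$, $x=y\setminus z$, $x=y\otimes z$, $x\subseteq y$ with $x,y,z$ set variables; a set assignment $M$ satisfies it if it is true when each variable $v$ is interpreted as $Mv$, and it is satisfiable if some set assignment on its variables satisfies it. A partition is a set of pairwise disjoint nonempty sets (blocks). For a partition $\Sigma$ and a finite set $V$ of variables, a partition assignment $\mathfrak I:V\to\mathcal P(\Sigma)$ induces the set assignment $M_{\mathfrak I}v=\bigcup\mathfrak I(v)$; $\Sigma$ satisfies $\Phi$ (with $\mathrm{Vars}(\Phi)\subseteq V$) if $M_{\mathfrak I}$ satisfies $\Phi$ for some such $\mathfrak I$. *)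

(* Defs.v *)
From mathcomp Require Import ssreflect ssrfun ssrbool eqtype ssrnat seq fintype.

Set Implicit Arguments.
Unset Strict Implicit.
Unset Printing Implicit Defensive.

(* Well-founded sets: Aczel's model of the (von Neumann) universe as   *)
(* well-founded trees, with extensional equality (bisimilarity).       *)
Inductive V : Type := sup : forall (A : Type), (A -> V) -> V.

Definition idx (x : V) : Type := match x with sup A _ => A end.
Definition elt (x : V) : idx x -> V := match x with sup _ f => f end.

Fixpoint Veq (x y : V) {struct x} : Prop :=
  match x, y with
  | sup A f, sup B g =>
      (forall a : A, exists b : B, Veq (f a) (g b)) /\
      (forall b : B, exists a : A, Veq (f a) (g b))
  end.

Definition Vin (x y : V) : Prop := exists b : idx y, Veq x (elt b).

Definition Vsubset (x y : V) : Prop := forall z, Vin z x -> Vin z y.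

Definition Vcup (x y : V) : V :=
  sup (fun p : idx x + idx y =>
         match p with inl a => elt a | inr b => elt b end).

Definition Vcap (x y : V) : V :=
  sup (fun p : {a : idx x | Vin (elt a) y} => elt (proj1_sig p)).

Definition Vdiff (x y : V) : V :=
  sup (fun p : {a : idx x | ~ Vin (elt a) y} => elt (proj1_sig p)).

Definition Vpair (u v : V) : V := sup (fun b : bool => if b then u else v).

Definition Votimes (s t : V) : V :=
  sup (fun p : idx s * idx t => Vpair (elt p.1) (elt p.2)).

Definition Vbigcup (x : V) : V :=
  sup (fun p : {a : idx x & idx (elt a)} => elt (projT2 p)).

Inductive bst_formula : Type :=
  | FUnion  : nat -> nat -> nat -> bst_formula
  | FInter  : nat -> nat -> nat -> bst_formula
  | FDiff   : nat -> nat -> nat -> bst_formula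
  | FOtimes : nat -> nat -> nat -> bst_formula
  | FSub    : nat -> nat -> bst_formula
  | FNot    : bst_formula -> bst_formula
  | FAnd    : bst_formula -> bst_formula -> bst_formula
  | FOr     : bst_formula -> bst_formula -> bst_formula
  | FImp    : bst_formula -> bst_formula -> bst_formula.

Fixpoint fvars (phi : bst_formula) : seq nat :=
  match phi with
  | FUnion x y z | FInter x y z | FDiff x y z | FOtimes x y z => [:: x; y; z]
  | FSub x y => [:: x; y]
  | FNot p => fvars p
  | FAnd p q | FOr p q | FImp p q => fvars p ++ fvars q
  end.

Definition nvars (phi : bst_formula) : nat := size (undup (fvars phi)).

Fixpoint bst_sat (M : nat -> V) (phi : bst_formula) : Prop :=
  match phi with
  | FUnion x y z  => Veq (M x) (Vcup (M y) (M z))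
  | FInter x y z  => Veq (M x) (Vcap (M y) (M z))
  | FDiff x y z   => Veq (M x) (Vdiff (M y) (M z))
  | FOtimes x y z => Veq (M x) (Votimes (M y) (M z))
  | FSub x y      => Vsubset (M x) (M y)
  | FNot p   => ~ bst_sat M p
  | FAnd p q => bst_sat M p /\ bst_sat M q
  | FOr p q  => bst_sat M p \/ bst_sat M q
  | FImp p q => bst_sat M p -> bst_sat M q
  end.

Definition bst_satisfiable (phi : bst_formula) : Prop :=
  exists M : nat -> V, bst_sat M phi.

Definition Vnonempty (x : V) : Prop := exists z, Vin z x.
Definition Vdisjoint (x y : V) : Prop := ~ exists z, Vin z x /\ Vin z y.

Definition is_partition (S : V) : Prop :=
  (forall b, Vin b S -> Vnonempty b) /\
  (forall b1 b2, Vin b1 S -> Vin b2 S -> ~ Veq b1 b2 -> Vdisjoint b1 b2).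

Definition Vcard_eq (S : V) (k : nat) : Prop :=
  exists f : 'I_k -> V,
    (forall i, Vin (f i) S) /\
    (forall i j, Veq (f i) (f j) -> i = j) /\
    (forall b, Vin b S -> exists i, Veq b (f i)).

(* A partition assignment J maps each variable to a subset of S (an
   element of P(S)); it induces the set assignment v |-> \bigcup J v.  *)
Definition partition_satisfies (S : V) (phi : bst_formula) : Prop :=
  exists J : nat -> V,
    (forall v, Vsubset (J v) S) /\
    bst_sat (fun v => Vbigcup (J v)) phi.

(* Main.v *)
Require Import Defs.
From mathcomp Require Import ssreflect ssrfun ssrbool eqtype ssrnat seq fintype.
From mathcomp Require Import choice finfun.
From Stdlib Require Import ClassicalEpsilon.
Set Implicit Arguments.
Unset Strict Implicit.

Lemma Veq_refl x : Veq x x.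
Proof. elim: x => A f IH /=; split => a; exists a; exact: IH. Qed.

Lemma Veq_sym x y : Veq x y -> Veq y x.
Proof.
elim: x y => A f IH [B g] /= [H1 H2]; split.
- move=> b; case: (H2 b) => a Ha; exists a; exact: IH.
- move=> a; case: (H1 a) => b Hb; exists b; exact: IH.
Qed.

Lemma Veq_trans x y z : Veq x y -> Veq y z -> Veq x z.
Proof.
elim: x y z => A f IH [B g] [C h] /= [H1 H2] [H3 H4]; split.
- move=> a; case: (H1 a) => b Hb; case: (H3 b) => c Hc; exists c; exact: IH Hb Hc.
- move=> c; case: (H4 c) => b Hb; case: (H2 b) => a Ha; exists a; exact: IH Ha Hb.
Qed.

Lemma Vext x y : Veq x y <-> forall z, Vin z x <-> Vin z y.
Proof.
case: x => A f; case: y => B g; rewrite /Vin /=; split.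
- move=> [H1 H2] z; split.
  + case=> a Ha; case: (H1 a) => b Hb; exists b; exact: Veq_trans Ha Hb.
  + case=> b Hb; case: (H2 b) => a Ha; exists a; exact: Veq_trans Hb (Veq_sym Ha).
- move=> H; split.
  + move=> a; apply: (proj1 (H (f a))); exists a; exact: Veq_refl.
  + move=> b; case: (proj2 (H (g b))); first by exists b; exact: Veq_refl.
    move=> a Ha; exists a; exact: Veq_sym.
Qed.

Lemma Vin_l z z' x : Veq z z' -> Vin z x -> Vin z' x.
Proof. move=> H [b Hb]; exists b; exact: Veq_trans (Veq_sym H) Hb. Qed.

Lemma Vin_r z x x' : Veq x x' -> Vin z x -> Vin z x'.
Proof. by move=> /Vext H /H. Qed.

Lemma in_cup z x y : Vin z (Vcup x y) <-> Vin z x \/ Vin z y.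
Proof.
case: x => A f; case: y => B g; rewrite /Vin /=; split.
- by case=> [[a|b] H]; [left; exists a | right; exists b].
- by case=> [[a H]|[b H]]; [exists (inl a) | exists (inr b)].
Qed.

Lemma in_cap z x y : Vin z (Vcap x y) <-> Vin z x /\ Vin z y.
Proof.
case: x => A f; rewrite /Vin /=; split.
- case=> [[a Ha] /= Hz]; split; first by exists a.
  exact: Vin_l (Veq_sym Hz) Ha.
- case=> [[a Ha] Hy].
  by exists (exist _ a (Vin_l Ha Hy)).
Qed.

Lemma in_diff z x y : Vin z (Vdiff x y) <-> Vin z x /\ ~ Vin z y.
Proof.
case: x => A f; rewrite /Vin /=; split.
- case=> [[a Ha] /= Hz]; split; first by exists a.
  by move=> Hy; apply: Ha; apply: Vin_l Hz Hy.
- case=> [[a Ha] Hy].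
  have Hn : ~ Vin (f a) y by move=> H; apply: Hy; apply: Vin_l (Veq_sym Ha) H.
  by exists (exist _ a Hn).
Qed.

Lemma in_pair w u v : Vin w (Vpair u v) <-> Veq w u \/ Veq w v.
Proof.
rewrite /Vin /=; split.
- by case=> [[] H]; [left | right].
- by case=> H; [exists true | exists false].
Qed.

Lemma pair_congr u u' v v' : Veq u u' -> Veq v v' -> Veq (Vpair u v) (Vpair u' v').
Proof. by move=> Hu Hv /=; split; case; [exists true|exists false|exists true|exists false]. Qed.

Lemma in_otimes z s t :
  Vin z (Votimes s t) <-> exists u v, Vin u s /\ Vin v t /\ Veq z (Vpair u v).
Proof.
case: s => A f; case: t => B g; split.
- case=> [[a b] /= H]; exists (f a), (g b); split; [|split] => //.
  + by exists a; exact: Veq_refl.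
  + by exists b; exact: Veq_refl.
- case=> u [v [[a Ha] [[b Hb] Hz]]]; exists (a, b) => /=.
  exact: Veq_trans Hz (pair_congr Ha Hb).
Qed.

Lemma in_bigcup z x : Vin z (Vbigcup x) <-> exists y, Vin y x /\ Vin z y.
Proof.
case: x => A f; split.
- case=> [[a b] /= H]; exists (f a); split; first by exists a; exact: Veq_refl.
  by exists b.
- case=> y [[a Ha] Hz]; case: (Vin_r Ha Hz) => b Hb.
  by exists (existT _ a b).
Qed.

Lemma Veq_iff a a' b b' : Veq a a' -> Veq b b' -> (Veq a b <-> Veq a' b').
Proof.
move=> Ha Hb; split => H.
- exact: Veq_trans (Veq_sym Ha) (Veq_trans H Hb).
- exact: Veq_trans Ha (Veq_trans H (Veq_sym Hb)).
Qed.

Lemma cup_congr x x' y y' : Veq x x' -> Veq y y' -> Veq (Vcup x y) (Vcup x' y').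
Proof.
move=> /Vext Hx /Vext Hy; apply/Vext => z; rewrite !in_cup.
by rewrite (Hx z) (Hy z).
Qed.

Lemma cap_congr x x' y y' : Veq x x' -> Veq y y' -> Veq (Vcap x y) (Vcap x' y').
Proof.
move=> /Vext Hx /Vext Hy; apply/Vext => z; rewrite !in_cap.
by rewrite (Hx z) (Hy z).
Qed.

Lemma diff_congr x x' y y' : Veq x x' -> Veq y y' -> Veq (Vdiff x y) (Vdiff x' y').
Proof.
move=> /Vext Hx /Vext Hy; apply/Vext => z; rewrite !in_diff.
by rewrite (Hx z) (Hy z).
Qed.

Lemma otimes_congr x x' y y' : Veq x x' -> Veq y y' -> Veq (Votimes x y) (Votimes x' y').
Proof.
move=> /Vext Hx /Vext Hy; apply/Vext => z; rewrite !in_otimes; split.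
- case=> u [v [Hu [Hv Hz]]]; exists u, v; split; [|split] => //.
  + by apply/Hx. + by apply/Hy.
- case=> u [v [Hu [Hv Hz]]]; exists u, v; split; [|split] => //.
  + by apply/Hx. + by apply/Hy.
Qed.

Lemma sat_congr M M' phi :
  (forall v, v \in fvars phi -> Veq (M v) (M' v)) ->
  (bst_sat M phi <-> bst_sat M' phi).
Proof.
elim: phi => [x y z|x y z|x y z|x y z|x y|p IH|p IHp q IHq|p IHp q IHq|p IHp q IHq] /= H.
- apply: Veq_iff; first by apply: H; rewrite !inE eqxx.
  by apply: cup_congr; apply: H; rewrite !inE eqxx ?orbT.
- apply: Veq_iff; first by apply: H; rewrite !inE eqxx.
  by apply: cap_congr; apply: H; rewrite !inE eqxx ?orbT.
- apply: Veq_iff; first by apply: H; rewrite !inE eqxx.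
  by apply: diff_congr; apply: H; rewrite !inE eqxx ?orbT.
- apply: Veq_iff; first by apply: H; rewrite !inE eqxx.
  by apply: otimes_congr; apply: H; rewrite !inE eqxx ?orbT.
- have /Vext Hx : Veq (M x) (M' x) by apply: H; rewrite !inE eqxx.
  have /Vext Hy : Veq (M y) (M' y) by apply: H; rewrite !inE eqxx ?orbT.
  rewrite /Vsubset; split => Hs w.
  + by move=> /Hx /Hs /Hy.
  + by move=> /Hx /Hs /Hy.
- by rewrite IH.
- rewrite IHp ?IHq // => v Hv; apply: H; by rewrite mem_cat Hv ?orbT.
- rewrite IHp ?IHq // => v Hv; apply: H; by rewrite mem_cat Hv ?orbT.
- rewrite IHp ?IHq // => v Hv; apply: H; by rewrite mem_cat Hv ?orbT.
Qed.

Lemma no_cycle x y : Vin y x -> Vin x y -> False.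
Proof.
elim: x y => A f IH y [a /= Ha] Hxy.
apply: (IH a (sup f)); first exact: Vin_r Ha Hxy.
by exists a; exact: Veq_refl.
Qed.

Fixpoint NV (k : nat) : V :=
  match k with
  | 0 => sup (fun x : False => match x with end)
  | k'.+1 => sup (fun _ : unit => NV k')
  end.

Lemma NV_inj k l : Veq (NV k) (NV l) -> k = l.
Proof.
elim: k l => [|k IH] [|l] //=.
- by case=> _ H; case: (H tt).
- by case=> H _; case: (H tt).
- by case=> H _; case: (H tt) => _ /IH ->.
Qed.

Definition Vsing x := sup (fun _ : unit => x).

Lemma in_sing z x : Vin z (Vsing x) <-> Veq z x.
Proof. by split; [case|exists tt]. Qed.

Definition asb (P : Prop) : bool := if excluded_middle_informative P then true else false.
Lemma asbP P : asb P <-> P.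
Proof. by rewrite /asb; destruct (excluded_middle_informative _). Qed.

Section Construction.
Variable M : nat -> V.
Variable vs : seq nat.

Definition MU := Vbigcup (sup (fun j : 'I_(size vs) => M (nth 0 vs j))).

Lemma in_MU z : Vin z MU <-> exists l : 'I_(size vs), Vin z (M (nth 0 vs l)).
Proof.
rewrite /MU in_bigcup; split.
- by case=> y [[l Hl] Hz]; exists l; exact: Vin_r Hl Hz.
- by case=> l Hl; exists (M (nth 0 vs l)); split => //; exists l; exact: Veq_refl.
Qed.

Definition Preg (a : {ffun 'I_(size vs) -> bool}) z :=
  forall j : 'I_(size vs), Vin z (M (nth 0 vs j)) <-> a j.

Lemma Preg_congr a z z' : Veq z z' -> Preg a z -> Preg a z'.
Proof.
move=> E H j; rewrite -(H j); split.
- exact: Vin_l (Veq_sym E).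
- exact: Vin_l E.
Qed.

Definition Rg a := sup (fun p : {q : idx MU | Preg a (elt q)} => elt (proj1_sig p)).

Lemma in_Rg a z : Vin z (Rg a) <-> Vin z MU /\ Preg a z.
Proof.
split.
- case=> [[q Hq] /= Hz]; split; first by exists q.
  exact: Preg_congr (Veq_sym Hz) Hq.
- case=> [[q Hq] Hp].
  by exists (exist _ q (Preg_congr Hq Hp)).
Qed.

Definition Tp := {a : {ffun 'I_(size vs) -> bool} | a != [ffun => false]}.

Lemma cardTp : #|{:Tp}| = 2 ^ size vs - 1.
Proof. by rewrite card_sig cardC1 card_ffun card_bool card_ord subn1. Qed.

Definition kk := 2 ^ size vs - 1.

Definition gg (i : 'I_kk) : Tp := enum_val (cast_ord (esym cardTp) i).

Lemma gg_inj : injective gg.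
Proof. by move=> i j /enum_val_inj /cast_ord_inj. Qed.

Definition tagv (i : nat) := Vpair MU (NV i).

Lemma tag_notin i : ~ Vin (tagv i) MU.
Proof.
move=> H; apply: (no_cycle H); exists true; exact: Veq_refl.
Qed.

Lemma tag_inj i j : Veq (tagv i) (tagv j) -> i = j.
Proof.
move=> /Vext E.
have Hi : Vin (NV i) (tagv j) by apply/E; exists false; exact: Veq_refl.
have Hj : Vin (NV j) (tagv i) by apply/E; exists false; exact: Veq_refl.
move: Hi Hj; rewrite !in_pair => - [Hi|Hi]; last by move/NV_inj: Hi.
case=> [Hj|Hj]; last by move/NV_inj: Hj.
by apply: NV_inj; exact: Veq_trans Hi (Veq_sym Hj).
Qed.

Definition blk (i : 'I_kk) : V :=
  if excluded_middle_informative (Vnonempty (Rg (val (gg i))))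
  then Rg (val (gg i)) else Vsing (tagv i).

Lemma blkE i : Vnonempty (Rg (val (gg i))) -> blk i = Rg (val (gg i)).
Proof. by rewrite /blk; destruct (excluded_middle_informative _). Qed.

Lemma blk_ne i : Vnonempty (blk i).
Proof.
rewrite /blk; destruct (excluded_middle_informative _) as [h|h]; first exact: h.
by exists (tagv i); exists tt; exact: Veq_refl.
Qed.

Lemma blk_disj i j : i != j -> Vdisjoint (blk i) (blk j).
Proof.
move=> nij [z []]; rewrite /blk.
destruct (excluded_middle_informative (Vnonempty (Rg (val (gg i))))); destruct (excluded_middle_informative (Vnonempty (Rg (val (gg j))))).
- move=> /in_Rg [_ Hi] /in_Rg [_ Hj].
  have E : val (gg i) = val (gg j).
    apply/ffunP => l; apply/idP/idP.
    + by move=> /Hi /Hj.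
    + by move=> /Hj /Hi.
  by move: nij; rewrite (gg_inj (val_inj E)) eqxx.
- move=> /in_Rg [HU _] /in_sing E; apply: (tag_notin (i := j)) => //.
  exact: Vin_l E HU.
- move=> /in_sing E /in_Rg [HU _]; apply: (tag_notin (i := i)) => //.
  exact: Vin_l E HU.
- move=> /in_sing Ei /in_sing Ej.
  have /tag_inj E : Veq (tagv i) (tagv j) by exact: Veq_trans (Veq_sym Ei) Ej.
  by move: nij; rewrite (ord_inj E) eqxx.
Qed.

Definition SS := sup blk.

Definition bitv (a : {ffun 'I_(size vs) -> bool}) v :=
  [exists l : 'I_(size vs), (nth 0 vs l == v) && a l].

Definition JJ v := sup (fun p : {i : 'I_kk | bitv (val (gg i)) v /\ Vnonempty (Rg (val (gg i)))} =>
  blk (proj1_sig p)).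

Lemma key v : v \in vs -> Veq (M v) (Vbigcup (JJ v)).
Proof.
move=> vin.
pose j : 'I_(size vs) := Ordinal (eq_ind_r is_true vin (index_mem v vs)).
have ej : nth 0 vs j = v by rewrite /= nth_index.
apply/Vext => z; rewrite in_bigcup; split.
- move=> Hz.
  pose a := [ffun l : 'I_(size vs) => asb (Vin z (M (nth 0 vs l)))].
  have Ha0 : a != [ffun => false].
    apply/negP => /eqP H; have := congr1 (fun f : {ffun 'I_(size vs) -> bool} => f j) H; rewrite !ffunE.
    have : asb (Vin z (M (nth 0 vs j))) by apply/asbP; rewrite ej.
    by move=> ->.
  pose a' : Tp := exist _ a Ha0.
  pose i := cast_ord cardTp (enum_rank a').
  have gi : gg i = a' by rewrite /gg /i cast_ordK enum_rankK.
  have HR : Vin z (Rg a).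
    apply/in_Rg; split; first by apply/in_MU; exists j; rewrite ej.
    by move=> l; rewrite ffunE; split => /asbP.
  have Hne : Vnonempty (Rg (val (gg i))) by rewrite gi; exists z.
  have Hb : bitv (val (gg i)) v.
    rewrite gi /=; apply/existsP; exists j; rewrite ej eqxx /= ffunE.
    by apply/asbP; rewrite ej.
  exists (blk i); split.
  + by exists (exist _ i (conj Hb Hne)); exact: Veq_refl.
  + by rewrite blkE // gi.
- case=> y [[[i [Hb Hne]] /= Hy] Hz].
  rewrite blkE // in Hy.
  have /in_Rg [_ HP] := Vin_r Hy Hz.
  case/existsP: Hb => l /andP [/eqP el al].
  by rewrite -el; apply/HP.
Qed.

End Construction.

Theorem mainTheorem14 (phi : bst_formula) :
  bst_satisfiable phi <->
  exists S : V,
    is_partition S /\ Vcard_eq S (2 ^ nvars phi - 1) /\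
    partition_satisfies S phi.
Proof.
split; last first.
  by case=> S [_ [_ [J [_ HJ]]]]; exists (fun v => Vbigcup (J v)).
case=> M HM.
set vs := undup (fvars phi).
exists (SS M vs); split; [|split].
- split.
  + move=> b [i /= Hb]; case: (blk_ne M i) => z Hz.
    by exists z; exact: Vin_r (Veq_sym Hb) Hz.
  + move=> b1 b2 [i /= H1] [j /= H2] Hn.
    case: (eqVneq i j) => [eij|nij].
      by exfalso; apply: Hn; rewrite eij in H1; exact: Veq_trans H1 (Veq_sym H2).
    move=> [z [Hz1 Hz2]]; apply: (blk_disj (M:=M) nij); exists z; split.
    * exact: Vin_r H1 Hz1.
    * exact: Vin_r H2 Hz2.
- exists (blk M (vs:=vs)); split; [|split].
  + by move=> i; exists i; exact: Veq_refl.
  + move=> i j E; case: (eqVneq i j) => // nij; exfalso.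
    case: (blk_ne M i) => z Hz; apply: (blk_disj (M:=M) nij); exists z; split => //.
    exact: Vin_r E Hz.
  + by move=> b [i Hb]; exists i.
- exists (JJ M vs); split.
  + by move=> v z [[i _] /= Hz]; exists i.
  + apply: (proj1 (sat_congr _)) HM => v Hv.
    by apply: key; rewrite mem_undup.
Qed.
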